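(* Let $m$ be a positive integer and $\theta \geq 2m$ a real number. Let $p_0 < p_1 < \cdots < p_{s-1}$ be prime numbers lying between $2m$ and $3m$, put $\alpha_i = 3m - p_i$ for $0 \le i \le s-1$, and $k = 6m$. For $1 \le j \le k$ define $$coef_1(j) = \begin{cases} \theta/2 - \alpha_i & \text{if } j = 3m-\alpha_i \ (= p_i) \text{ for some } 0\le i\le s-1,\\ \theta/2 + \alpha_i & \text{if } j = 2(3m-\alpha_i)\ (=2p_i) \text{ for some } 0 \le i \le s-1,\\ -k(\theta+m) & \text{otherwise.}\end{cases}$$ For each $i$, let $\{x^{\alpha_i}(n) : n \ge 0\}$ be the sequence whose first $k$ terms are $$x^{\alpha_i}(0)\cdots x^{\alpha_i}(k-1) = \underbrace{0\cdots 0}_{2\alpha_i}\,1\underbrace{0\cdots0}_{3m-\alpha_i-1}\,1\underbrace{0\cdots0}_{3m-\alpha_i-1}$$ and, for $n \ge k$, $x^{\alpha_i}(n) = \mathbf{1}\big(\sum_{j=1}^{k} coef_1(j)\, x^{\alpha_i}(n-j) - \theta\big)$. Let $\{u(n) : n \ge 0\}$ be any sequence with arbitrary initial terms $u(0)u(1)\cdots u(k-1) \in \{0,1\}^k$ and $u(n) = \mathbf{1}\big(\sum_{j=1}^{k} coef_1(j)\, u(n-j) - \theta\big)$ for $n \ge k$. Then the sequence $u$ converges either to the null sequence $000\cdots$, or to one of the sequences $\{x^{\alpha_i}(n) : n\ge 0\}$, $0 \le i \le s-1$ (i.e. its eventual cycle is that of $x^{\alpha_i}$, up to a shift of indices).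
   Context: $\mathbf{1}(v) = 0$ if $v < 0$ and $\mathbf{1}(v) = 1$ if $v \ge 0$. A $0$-$1$ sequence generated by such a recurrence is eventually periodic; ''converges to'' a sequence means that after some transient it coincides (up to a shift of indices) with the periodic part of that sequence. *)

(* Defs.v *)
From mathcomp Require Import all_boot all_order all_algebra.
From mathcomp Require Import reals.
Set Implicit Arguments. Unset Strict Implicit. Unset Printing Implicit Defensive.
Import Order.TTheory GRing.Theory Num.Theory.
Local Open Scope ring_scope.

Definition ind {R : realType} (v : R) : nat := if 0 <= v then 1%N else 0%N.

Definition coef1 {R : realType} (m : nat) (theta : R) (ps : seq nat) (j : nat) : R :=
  if j \in ps then theta / 2 - (3 * m - j)%:R
  else if ~~ odd j && (j./2 \in ps) then theta / 2 + (3 * m - j./2)%:R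
  else - (6 * m)%:R * (theta + m%:R).

Definition recur {R : realType} (m : nat) (theta : R) (ps : seq nat) (u : nat -> nat) : Prop :=
  forall n, (6 * m <= n)%N ->
    u n = ind (\sum_(1 <= j < (6 * m).+1) coef1 m theta ps j * (u (n - j)%N)%:R - theta).

(* initial block of x^alpha: 0^{2 alpha} 1 0^{3m-alpha-1} 1 0^{3m-alpha-1} *)
Definition xinit (m a n : nat) : nat :=
  if (n == 2 * a)%N || (n == 2 * a + (3 * m - a))%N then 1%N else 0%N.

Definition converges_to (u v : nat -> nat) : Prop :=
  exists N1 N2 : nat, forall n : nat, u (N1 + n)%N = v (N2 + n)%N.

Definition converges_to_null (u : nat -> nat) : Prop :=
  exists N : nat, forall n : nat, (N <= n)%N -> u n = 0%N.

(* Main.v *)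
Require Import Defs.
From mathcomp Require Import all_boot all_order all_algebra.
From mathcomp Require Import reals zify ring lra.
From Stdlib Require Import Classical.
Import Order.TTheory GRing.Theory Num.Theory.
Local Open Scope ring_scope.
Set Implicit Arguments. Unset Strict Implicit. Unset Printing Implicit Defensive.

Lemma sum0n (R : realType) K1 K2 (F : nat -> R) :
  (forall j, (K1 <= j < K2)%N -> F j = 0) -> \sum_(K1 <= j < K2) F j = 0.
Proof. by move=> H; rewrite big_nat_cond big1 // => j /andP[h _]; apply: H. Qed.

Lemma sum_one (R : realType) K (F : nat -> R) a :
  (1 <= a <= K)%N -> (forall j, (1 <= j <= K)%N -> j != a -> F j = 0) ->
  \sum_(1 <= j < K.+1) F j = F a.
Proof.
move=> /andP[a1 aK] H.
rewrite (big_cat_nat _ (n:=a)) /=; [|lia|lia].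
rewrite [X in _ + X]big_ltn; last lia.
rewrite sum0n ?add0r; last by move=> j hj; apply: H; lia.
rewrite sum0n ?addr0 // => j hj; apply: H; lia.
Qed.

Lemma sum_two (R : realType) K (F : nat -> R) a b :
  (1 <= a <= K)%N -> (1 <= b <= K)%N -> a != b ->
  (forall j, (1 <= j <= K)%N -> j != a -> j != b -> F j = 0) ->
  \sum_(1 <= j < K.+1) F j = F a + F b.
Proof.
move=> ha hb ab H.
rewrite (@eq_big_nat _ _ _ _ _ _ (fun j => (if j == a then F a else 0) + (if j == b then F b else 0))).
  rewrite big_split /= (@sum_one _ _ _ a) // ?eqxx; last by move=> j _ /negbTE ->.
  rewrite (@sum_one _ _ _ b) // ?eqxx; last by move=> j _ /negbTE ->.
  by [].
move=> j hj; case: eqP => [->|/eqP ja]; first by rewrite (negbTE ab) addr0.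
case: eqP => [->|/eqP jb]; first by rewrite add0r.
rewrite addr0 H //; lia.
Qed.

Lemma sum_le (R : realType) K1 K2 (F : nat -> R) B :
  (forall j, (K1 <= j < K2)%N -> F j <= B) -> \sum_(K1 <= j < K2) F j <= B *+ (K2 - K1).
Proof. by move=> H; rewrite -sumr_const_nat; apply: ler_sum_nat. Qed.

Definition W (R : realType) (m : nat) (theta : R) (ps : seq nat) (v : nat -> nat) (t : nat) : R :=
  \sum_(1 <= j < (6 * m)%N.+1) Defs.coef1 m theta ps j * (v (t - j)%N)%:R.

Definition good (ps : seq nat) j := (j \in ps) || (~~ odd j && (j./2 \in ps)).

Lemma inps m ps p : all (fun p => (2 * m < p < 3 * m)%N) ps -> p \in ps -> (2 * m < p < 3 * m)%N.
Proof. by move=> /allP H /H. Qed.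

Lemma good_gt m ps j : all (fun p => (2 * m < p < 3 * m)%N) ps -> good ps j -> (2 * m < j)%N.
Proof.
move=> H /orP[/(inps H)|/andP[od /(inps H)]]; first lia.
have := odd_double_half j; rewrite (negbTE od) /=; lia.
Qed.

Lemma coef_bad (R : realType) m (theta : R) ps j : ~~ good ps j ->
  Defs.coef1 m theta ps j = - (6 * m)%:R * (theta + m%:R).
Proof. by rewrite /good negb_or => /andP[/negbTE h1 /negbTE h2]; rewrite /Defs.coef1 h1 h2. Qed.

Lemma coef_le (R : realType) m (theta : R) ps j :
  all (fun p => (2 * m < p < 3 * m)%N) ps -> 0 <= theta ->
  Defs.coef1 m theta ps j <= theta / 2 + m%:R.
Proof.
move=> H th0; rewrite /Defs.coef1.
case: ifP => [_|_].
  have : 0 <= ((3 * m - j)%N)%:R :> R by rewrite ler0n.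
  have : 0 <= m%:R :> R by rewrite ler0n.
  lra.
case: ifP => [/andP[_ /(inps H) h]|_].
  rewrite lerD2l ler_nat; lia.
have : 0 <= m%:R :> R by rewrite ler0n.
have : 0 <= (6 * m)%:R :> R by rewrite ler0n.
move=> h1 h2.
have : 0 <= (6 * m)%:R * (theta + m%:R) :> R by apply: mulr_ge0 => //; lra.
lra.
Qed.

Lemma LA (R : realType) m (theta : R) ps (v : nat -> nat) t a :
  (0 < m)%N -> (2 * m)%:R <= theta ->
  all (fun p => (2 * m < p < 3 * m)%N) ps ->
  (forall j, (1 <= j <= 6 * m)%N -> (v (t - j) <= 1)%N) ->
  (1 <= a <= 6 * m)%N -> ~~ good ps a -> v (t - a)%N = 1%N ->
  W m theta ps v t < theta.
Proof.
move=> hm hth H hv ha hbad hva.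
have th0 : 0 <= theta.
  apply: le_trans hth; by rewrite ler0n.
set B := theta / 2 + m%:R.
have hB : forall j, (1 <= j <= 6 * m)%N -> Defs.coef1 m theta ps j * (v (t - j)%N)%:R <= B.
  move=> j hj; have := hv j hj; case: (v (t - j)%N) => [|[|//]] _.
    rewrite mulr0 /B; have : 0 <= m%:R :> R by rewrite ler0n. lra.
  by rewrite mulr1; apply: coef_le.
rewrite /W (big_cat_nat _ (n:=a)) /=; [|lia|lia].
rewrite [X in _ + X]big_ltn; last lia.
have h1 := @sum_le R 1 a (fun j => Defs.coef1 m theta ps j * (v (t - j)%N)%:R) B.
have h2 := @sum_le R a.+1 (6 * m)%N.+1 (fun j => Defs.coef1 m theta ps j * (v (t - j)%N)%:R) B.
have {h1} h1 : \sum_(1 <= j < a) Defs.coef1 m theta ps j * (v (t - j)%N)%:R <= B *+ (a - 1).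
  apply: h1 => j hj; apply: hB; lia.
have {h2} h2 : \sum_(a.+1 <= j < (6 * m)%N.+1) Defs.coef1 m theta ps j * (v (t - j)%N)%:R <= B *+ ((6 * m)%N.+1 - a.+1).
  apply: h2 => j hj; apply: hB; lia.
rewrite hva mulr1 coef_bad //.
have e : (B *+ (a - 1) + B *+ ((6 * m)%N.+1 - a.+1)) = B * (((6 * m)%N)%:R - 1).
  rewrite -mulrnDr (_ : (a - 1 + _)%N = (6 * m - 1)%N); last lia.
  by rewrite -[LHS]mulr_natr natrB; last lia.
have hm0 : 0 <= m%:R :> R by rewrite ler0n.
have hM : 1 <= m%:R :> R by rewrite ler1n.
move: h1 h2 e; set S1 := \sum_(1 <= j < a) _; set S2 := \sum_(a.+1 <= j < _) _.
set X1 := B *+ _; set X2 := B *+ _.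
rewrite natrM in hth *; rewrite natrM.
move: hth hM hm0; rewrite /B; set M := (m%:R : R).
move=> hth hM hm0 h1 h2 e.
nra.
Qed.

Lemma ind_lt (R : realType) (w theta : R) : w < theta -> Defs.ind (w - theta) = 0%N.
Proof. by move=> h; rewrite /Defs.ind subr_ge0 leNgt h. Qed.

Lemma ind_ge (R : realType) (w theta : R) : theta <= w -> Defs.ind (w - theta) = 1%N.
Proof. by move=> h; rewrite /Defs.ind subr_ge0 h. Qed.

Lemma small_dvd p k : (0 < p)%N -> (k < 3 * p)%N -> (p %| k)%N -> k = 0%N \/ k = p \/ k = (2 * p)%N.
Proof.
move=> p0 hk /dvdnP[c hc]; subst k.
have : (c < 3)%N by rewrite -(ltn_pmul2r p0).
move: hk; case: c => [|[|[|c]]] h1 h2 /=; lia.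
Qed.

Lemma coef_p (R : realType) m (theta : R) ps p : p \in ps ->
  Defs.coef1 m theta ps p = theta / 2 - (3 * m - p)%:R.
Proof. by move=> h; rewrite /Defs.coef1 h. Qed.

Lemma coef_2p (R : realType) m (theta : R) ps q :
  all (fun p => (2 * m < p < 3 * m)%N) ps -> q \in ps ->
  Defs.coef1 m theta ps (2 * q) = theta / 2 + (3 * m - q)%:R.
Proof.
move=> H h; have := inps H h => hq.
have h2 : (2 * q \in ps) = false.
  by apply/negbTE/negP => /(inps H); lia.
by rewrite /Defs.coef1 h2 mul2n odd_double doubleK h.
Qed.

Lemma xchar (R : realType) m (theta : R) ps (y : nat -> nat) p :
  (0 < m)%N -> (2 * m)%:R <= theta ->
  all (fun p => (2 * m < p < 3 * m)%N) ps -> p \in ps ->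
  (forall n, (n < 6 * m)%N -> y n = Defs.xinit m (3 * m - p) n) ->
  Defs.recur m theta ps y ->
  forall n, y n = if (2 * (3 * m - p) <= n)%N && (p %| n - 2 * (3 * m - p))%N then 1%N else 0%N.
Proof.
move=> hm hth H hp hinit hrec.
have /andP[hp1 hp2] := inps H hp.
move eqa : (3 * m - p)%N => a.
have {}hinit : forall n, (n < 6 * m)%N -> y n = Defs.xinit m a n by rewrite -eqa.
have ea : (6 * m = 2 * a + 2 * p)%N by lia.
have ha : (2 * a < 2 * m)%N by lia.
have e3a : (3 * m - a)%N = p by lia.
elim/ltn_ind => n IH.
case: (ltnP n (6 * m)) => hn.
  rewrite hinit // /Defs.xinit e3a.
  case: (boolP ((2 * a <= n)%N && (p %| n - 2 * a)%N)) => [/andP[h1 h2]|hc].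
    have hp0 : (0 < p)%N by lia.
    have hk : (n - 2 * a < 3 * p)%N by lia.
    case: (small_dvd hp0 hk h2) => [e|[e|e]]; case: ifP => //; lia.
  case: ifP => //; move=> /orP[/eqP e| /eqP e]; case/negP: hc; rewrite e.
    by rewrite subnn dvdn0 leqnn.
  by rewrite addKn dvdnn leq_addr.
rewrite hrec //.
have hv : forall j, (1 <= j <= 6 * m)%N -> y (n - j)%N =
    if (2 * a <= n - j)%N && (p %| n - j - 2 * a)%N then 1%N else 0%N.
  by move=> j hj; apply: IH; lia.
have hv1 : forall j, (1 <= j <= 6 * m)%N -> (y (n - j) <= 1)%N.
  by move=> j hj; rewrite hv //; case: ifP.
case: (boolP (p %| n - 2 * a)%N) => hd.
  have c1 : (2 * a <= n)%N by lia.
  rewrite c1 /=.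
  apply: ind_ge.
  have y1 : y (n - p)%N = 1%N.
    rewrite hv; last lia.
    rewrite (_ : (n - p - 2 * a = (n - 2 * a) - p)%N); last lia.
    by rewrite (dvdn_sub hd (dvdnn p)) andbT (_ : (2 * a <= n - p)%N); last lia.
  have y2 : y (n - 2 * p)%N = 1%N.
    rewrite hv; last lia.
    rewrite (_ : (n - 2 * p - 2 * a = (n - 2 * a) - 2 * p)%N); last lia.
    by rewrite (dvdn_sub hd (dvdn_mull 2 (dvdnn p))) andbT (_ : (2 * a <= n - 2 * p)%N); last lia.
  rewrite (@sum_two R (6 * m) _ p (2 * p)); [|lia|lia|lia|].
    rewrite y1 y2 !mulr1 coef_p // coef_2p //; lra.
  move=> j hj hjp hj2p; rewrite hv //; case: ifP => [/andP[c2 c3]|_]; last by rewrite mulr0.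
  have e : (n - j - 2 * a = (n - 2 * a) - j)%N by lia.
  have hjn : (j <= n - 2 * a)%N by lia.
  move: c3; rewrite e dvdn_subr //.
  have hp0 : (0 < p)%N by lia.
  have hk : (j < 3 * p)%N by lia.
  move/(small_dvd hp0 hk) => -[]; lia.
rewrite andbF.
apply: ind_lt.
set r := ((n - 2 * a) %% p)%N.
have r0 : (0 < r)%N by rewrite lt0n.
have rp : (r < p)%N by rewrite ltn_pmod //; lia.
set Q := ((n - 2 * a) %/ p)%N.
have eq : (n - 2 * a = Q * p + r)%N by rewrite /Q /r -divn_eq.
have rmod : forall j c, (n - 2 * a = c * p + j)%N -> (j %% p = r)%N.
  by move=> j c e; rewrite /r e modnMDl.
clearbody r Q.
have dr : (p %| n - r - 2 * a)%N.
  by rewrite (_ : (n - r - 2 * a = Q * p)%N); [exact: dvdn_mull (dvdnn p)| lia].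
have yr : y (n - r)%N = 1%N.
  by rewrite hv; [rewrite dr andbT (_ : (2 * a <= n - r)%N); last lia | lia].
clear hd eq Q.
case: (boolP (good ps r)) => gr; last first.
  by apply: (@LA _ _ _ _ _ _ r) => //; lia.
have rps : r \in ps.
  move: gr; rewrite /good => /orP[//|/andP[od h]].
  have := inps H h; have := odd_double_half r; rewrite (negbTE od) /=; lia.
have /andP[hr2 hr3] := inps H rps.
have yrp : y (n - (r + p))%N = 1%N.
  rewrite hv; last lia.
  rewrite (_ : (n - (r + p) - 2 * a = (n - r - 2 * a) - p)%N); last lia.
  by rewrite (dvdn_sub dr (dvdnn p)) andbT (_ : (2 * a <= n - (r + p))%N); last lia.
clear dr.
case: (boolP (good ps (r + p))) => grp; last first.
  by apply: (@LA _ _ _ _ _ _ (r + p)) => //; lia.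
have [od hq] : ~~ odd (r + p) /\ ((r + p)./2 \in ps).
  move: grp; rewrite /good => /orP[h|/andP[h1 h2]]; last by [].
  by have := inps H h; lia.
set q := (r + p)./2 in hq.
have eq2 : (r + p = 2 * q)%N.
  by have := odd_double_half (r + p); rewrite (negbTE od) add0n -mul2n.
clearbody q.
have /andP[hq1 hq2] := inps H hq.
rewrite (@sum_two R (6 * m) _ r (r + p)); [|lia|lia|lia|].
  rewrite yr yrp !mulr1 coef_p // eq2 coef_2p //.
  have : ((3 * m - q)%N%:R < (3 * m - r)%N%:R :> R) by rewrite ltr_nat; lia.
  lra.
move=> j hj hjr hjrp; rewrite hv //; case: ifP => [/andP[c2 /dvdnP[c hc]]|_]; last by rewrite mulr0.
have e1 : (n - 2 * a = c * p + j)%N by lia.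
have jr : (j %% p = r)%N by apply: (rmod j c).
clear hc e1 rmod.
have := divn_eq j p; rewrite jr; move: (j %/ p)%N => k.
case: k => [|[|k]] e3; [lia|lia|].
have : (2 * p <= k.+2 * p)%N by rewrite leq_pmul2r; lia.
lia.
Qed.

Lemma fire_ge (R : realType) m (theta : R) ps (u : nat -> nat) t :
  Defs.recur m theta ps u -> (6 * m <= t)%N -> u t = 1%N -> theta <= W m theta ps u t.
Proof.
move=> hrec ht ut; have := hrec t ht; rewrite ut /Defs.ind.
by case: ifP => // h _; rewrite subr_ge0 in h.
Qed.

Lemma fire1 (R : realType) m (theta : R) ps (u : nat -> nat) t :
  (0 < m)%N -> (2 * m)%:R <= theta ->
  all (fun p => (2 * m < p < 3 * m)%N) ps ->
  (forall n, (u n <= 1)%N) -> Defs.recur m theta ps u ->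
  (6 * m <= t)%N -> u t = 1%N ->
  forall j, (1 <= j <= 6 * m)%N -> u (t - j)%N = 1%N -> good ps j.
Proof.
move=> hm hth H hu hrec ht ut j hj uj; apply/negPn/negP => bad.
have h1 := fire_ge hrec ht ut.
have h2 := @LA R m theta ps u t j hm hth H (fun j _ => hu _) hj bad uj.
lra.
Qed.

Lemma fire2 (R : realType) m (theta : R) ps (u : nat -> nat) t :
  (0 < m)%N -> (2 * m)%:R <= theta ->
  (forall n, (u n <= 1)%N) -> Defs.recur m theta ps u ->
  (6 * m <= t)%N -> u t = 1%N ->
  exists j, (1 <= j <= 6 * m)%N /\ u (t - j)%N = 1%N.
Proof.
move=> hm hth hu hrec ht ut.
case: (classic (exists j, (1 <= j <= 6 * m)%N /\ u (t - j)%N = 1%N)) => // hno.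
have h1 := fire_ge hrec ht ut.
have : W m theta ps u t = 0.
  rewrite /W sum0n // => j hj.
  have : u (t - j)%N <> 1%N by move=> e; apply: hno; exists j; split => //; lia.
  have := hu (t - j)%N; case: (u (t - j)%N) => [|[|//]] // _ _; by rewrite mulr0.
have : (0 : R) < (2 * m)%:R by rewrite ltr0n; lia.
lra.
Qed.

Lemma gapL (R : realType) m (theta : R) ps (u : nat -> nat) s :
  (0 < m)%N -> (2 * m)%:R <= theta ->
  all (fun p => (2 * m < p < 3 * m)%N) ps ->
  (forall n, (u n <= 1)%N) -> Defs.recur m theta ps u ->
  (6 * m <= s)%N -> u s = 1%N ->
  forall j, (1 <= j <= 2 * m)%N -> u (s - j)%N = 0%N.
Proof.
move=> hm hth H hu hrec hs us j hj.
have := hu (s - j)%N; case E: (u (s - j)%N) => [|[|//]] // _.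
have := good_gt H (fire1 hm hth H hu hrec hs us (_ : (1 <= j <= 6 * m)%N) E).
lia.
Qed.

Lemma u01 (u : nat -> nat) n : (u n <= 1)%N -> u n <> 1%N -> u n = 0%N.
Proof. by case: (u n) => [|[|]]. Qed.

Lemma Sstruct (R : realType) m (theta : R) ps (u : nat -> nat) t :
  (0 < m)%N -> (2 * m)%:R <= theta ->
  all (fun p => (2 * m < p < 3 * m)%N) ps ->
  (forall n, (u n <= 1)%N) -> Defs.recur m theta ps u ->
  (12 * m <= t)%N -> u t = 1%N ->
  exists p q, [/\ p \in ps, q \in ps, (q <= p)%N & [/\ u (t - p)%N = 1%N, u (t - 2 * q)%N = 1%N &
     forall j, (1 <= j <= 6 * m)%N -> j != p -> j != (2 * q)%N -> u (t - j)%N = 0%N]].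
Proof.
move=> hm hth H hu hrec ht ut.
have ht6 : (6 * m <= t)%N by lia.
have hge := fire_ge hrec ht6 ut.
have th0 : (0 : R) < theta by apply: lt_le_trans hth; rewrite ltr0n; lia.
have hM : (m%:R : R) <= theta / 2 by move: hth; rewrite natrM; lra.
have [j0 [hj0 uj0]] := fire2 hm hth hu hrec ht6 ut.
have ex1 : exists j, (1 <= j <= 6 * m)%N && (u (t - j)%N == 1%N) by exists j0; rewrite hj0 uj0.
case: (ex_minnP ex1) => d1 /andP[hd1 /eqP ud1] min1.
have zb : forall j, (1 <= j < d1)%N -> u (t - j)%N = 0%N.
  move=> j hj; apply: u01 => // e; have := min1 j; rewrite e eqxx andbT.
  move=> h; have : (d1 <= j)%N by apply: h; lia.
  lia.
have gd1 := fire1 hm hth H hu hrec ht6 ut hd1 ud1.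
have hs1 : (6 * m <= t - d1)%N by lia.
have gap1 := gapL hm hth H hu hrec hs1 ud1.
move: gd1; rewrite /good => /orP[d1ps|/andP[od1 hq1]].
- have /andP[hd1a hd1b] := inps H d1ps.
  case: (classic (exists j, (d1 < j <= 6 * m)%N /\ u (t - j)%N = 1%N)) => [[j1 [hj1 uj1]]|hno].
    have ex2 : exists j, (d1 < j <= 6 * m)%N && (u (t - j)%N == 1%N) by exists j1; rewrite hj1 uj1.
    case: (ex_minnP ex2) => d2 /andP[hd2 /eqP ud2] min2.
    have zb2 : forall j, (d1 < j < d2)%N -> u (t - j)%N = 0%N.
      move=> j hj; apply: u01 => // e; have := min2 j; rewrite e eqxx andbT.
      move=> h; have : (d2 <= j)%N by apply: h; lia.
      lia.
    have hgap : (2 * m < d2 - d1)%N.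
      rewrite ltnNge; apply/negP => hle.
      have := gap1 (d2 - d1)%N (_ : (1 <= d2 - d1 <= 2 * m)%N).
      rewrite (_ : (t - d1 - (d2 - d1) = t - d2)%N) ?ud2 //; lia.
    have hd2r : (1 <= d2 <= 6 * m)%N by lia.
    have gd2 := fire1 hm hth H hu hrec ht6 ut hd2r ud2.
    move: gd2; rewrite /good => /orP[h|/andP[od2 hq2]].
      by have := inps H h; lia.
    have e2 : d2 = (2 * (d2./2))%N.
      by have := odd_double_half d2; rewrite (negbTE od2) add0n -mul2n.
    move: (d2./2) e2 hq2 => q e2 hq2; subst d2.
    have /andP[hq2a hq2b] := inps H hq2.
    have hs2 : (6 * m <= t - 2 * q)%N by lia.
    have gap2 := gapL hm hth H hu hrec hs2 ud2.
    have zall : forall j, (1 <= j <= 6 * m)%N -> j != d1 -> j != (2 * q)%N -> u (t - j)%N = 0%N.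
      move=> j hj hjd1 hj2.
      case: (ltnP j d1) => h1; first by apply: zb; lia.
      case: (ltnP j (2 * q)) => h2; first by apply: zb2; lia.
      have := gap2 (j - 2 * q)%N (_ : (1 <= j - 2 * q <= 2 * m)%N).
      rewrite (_ : (t - 2 * q - (j - 2 * q) = t - j)%N) //; lia.
    exists d1, q; split; [done|done| |by split].
    move: hge; rewrite /W (@sum_two R (6 * m) _ d1 (2 * q)); [|lia|lia|lia|]; last first.
      by move=> j hj hjd1 hj2; rewrite zall // mulr0.
    rewrite ud1 ud2 !mulr1 coef_p // coef_2p // => hge.
    have : ((3 * m - d1)%N%:R <= (3 * m - q)%N%:R :> R) by lra.
    rewrite ler_nat; lia.
  have zall : forall j, (1 <= j <= 6 * m)%N -> j != d1 -> u (t - j)%N = 0%N.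
    move=> j hj hj1.
    case: (ltnP j d1) => h1; first by apply: zb; lia.
    apply: u01 => // e; apply: hno; exists j; split => //; lia.
  move: hge; rewrite /W (@sum_one R (6 * m) _ d1) //; last first.
    by move=> j hj hj1; rewrite zall // mulr0.
  rewrite ud1 mulr1 coef_p //.
  have : (0 : R) <= (3 * m - d1)%N%:R by rewrite ler0n.
  lra.
- have e1 : d1 = (2 * (d1./2))%N.
    by have := odd_double_half d1; rewrite (negbTE od1) add0n -mul2n.
  move: (d1./2) e1 hq1 => q e1 hq1; subst d1.
  have /andP[hqa hqb] := inps H hq1.
  have zall : forall j, (1 <= j <= 6 * m)%N -> j != (2 * q)%N -> u (t - j)%N = 0%N.
    move=> j hj hj1.
    case: (ltnP j (2 * q)) => h1; first by apply: zb; lia.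
    have := gap1 (j - 2 * q)%N (_ : (1 <= j - 2 * q <= 2 * m)%N).
    rewrite (_ : (t - 2 * q - (j - 2 * q) = t - j)%N) //; lia.
  move: hge; rewrite /W (@sum_one R (6 * m) _ (2 * q)) //; last first.
    by move=> j hj hj1; rewrite zall // mulr0.
  rewrite ud1 mulr1 coef_2p //.
  have : ((3 * m - q)%N%:R : R) < m%:R by rewrite ltr_nat; lia.
  lra.
Qed.


Lemma maxP (Q : nat -> Prop) b : (forall g, Q g -> (g <= b)%N) -> (exists g, Q g) ->
  exists g, Q g /\ forall g', Q g' -> (g' <= g)%N.
Proof.
elim: b => [|b IH] hb [g0 hg0].
  exists g0; split => // g' hg'; have := hb _ hg'; have := hb _ hg0; lia.
case: (classic (Q b.+1)) => hQ.
  by exists b.+1; split => // g' /hb.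
apply: IH; last by exists g0.
move=> g hg; have h1 := hb _ hg; have h2 : g <> b.+1 by move=> e; apply: hQ; rewrite -e.
lia.
Qed.

Unset Implicit Arguments.
Theorem proposition5 (R : realType) (m : nat) (theta : R) (ps : seq nat)
    (x : nat -> nat -> nat) (u : nat -> nat) :
  (0 < m)%N ->
  (2 * m)%:R <= theta ->
  sorted ltn ps ->
  all prime ps ->
  all (fun p => (2 * m < p < 3 * m)%N) ps ->
  (forall p, p \in ps ->
     (forall n, (n < 6 * m)%N -> x p n = xinit m (3 * m - p) n) /\
     recur m theta ps (x p)) ->
  (forall n, (n < 6 * m)%N -> (u n <= 1)%N) ->
  recur m theta ps u ->
  converges_to_null u \/ exists2 p, p \in ps & converges_to u (x p).
Proof.
move=> hm hth _ _ H hx hu0 hrec.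
have hu : forall n, (u n <= 1)%N.
  move=> n; case: (ltnP n (6 * m)) => hn; first exact: hu0.
  by rewrite hrec // /Defs.ind; case: ifP.
case: (classic (converges_to_null u)) => hnull; [by left | right].
have hinf : forall N, exists n, (N <= n)%N /\ u n = 1%N.
  move=> N; apply: NNPP => hno; apply: hnull; exists N => n hn.
  by apply: u01 => // e; apply: hno; exists n.
pose isgap t g := [/\ u t = 1%N, g \in ps, u (t - g)%N = 1%N &
   forall j, (1 <= j < g)%N -> u (t - j)%N = 0%N].
have Sgap : forall t, (12 * m <= t)%N -> u t = 1%N -> exists g, isgap t g.
  move=> t ht ut.
  have [p [q [hp hq hqp [up uq zall]]]] := Sstruct hm hth H hu hrec ht ut.
  have /andP[hq1 hq2] := inps H hq; have /andP[hp1 hp2] := inps H hp.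
  exists p; split => // j hj; apply: zall; lia.
have Mono : forall t1 g1 g, (12 * m <= t1)%N -> isgap t1 g1 -> isgap (t1 - g1)%N g -> (g <= g1)%N.
  move=> t1 g1 g ht [ut hg1 ug1 z1] [_ hg ug _].
  have [p [q [hp hq hqp [up uq zall]]]] := Sstruct hm hth H hu hrec ht ut.
  have /andP[hq1 hq2] := inps H hq; have /andP[hp1 hp2] := inps H hp.
  have /andP[hg1a hg1b] := inps H hg1; have /andP[hga hgb] := inps H hg.
  have eg : g1 = p.
    case: (ltngtP g1 p) => // h.
      by move: ug1; rewrite zall //; lia.
    by move: up; rewrite z1 //; lia.
  subst g1.
  case: (eqVneq (p + g)%N (2 * q)%N) => e; first lia.
  by move: ug; rewrite -subnDA zall //; lia.
have Qb : forall g, (exists t, (12 * m <= t)%N /\ isgap t g) -> (g <= 3 * m)%N.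
  move=> g [t [_ [_ hg _ _]]]; have := inps H hg; lia.
have Qex : exists g, (exists t, (12 * m <= t)%N /\ isgap t g).
  have [t [ht ut]] := hinf (12 * m)%N.
  have [g hg] := Sgap t ht ut.
  by exists g, t.
have [P [[ts [hts gts]] Pmax]] := maxP Qb Qex.
have Next : forall t, (12 * m <= t)%N -> isgap t P ->
    isgap (t + P)%N P /\ forall i, (0 < i < P)%N -> u (t + i)%N = 0%N.
  move=> t ht gt.
  have ex1 : exists n, (t < n)%N && (u n == 1%N).
    have [n [hn un]] := hinf t.+1; exists n; rewrite un eqxx andbT; lia.
  case: (ex_minnP ex1) => t1 /andP[ht1 /eqP ut1] min1.
  have ht1' : (12 * m <= t1)%N by lia.
  have [g1 gt1] := Sgap t1 ht1' ut1.
  have e1 : (t1 - g1)%N = t.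
    case: gt1 => _ hg1 ug1 z1; have /andP[hg1a hg1b] := inps H hg1.
    case: (ltngtP (t1 - g1)%N t) => // h.
      case: gt => ut _ _ _.
      have := z1 (t1 - t)%N; rewrite (_ : (t1 - (t1 - t) = t)%N); last lia.
      rewrite ut; move=> h2; have : (1%N = 0%N) by apply: h2; lia. by [].
    have := min1 (t1 - g1)%N; rewrite ug1 eqxx andbT => h2.
    have : (t1 <= t1 - g1)%N by apply: h2; lia.
    lia.
  have hP1 : (g1 <= P)%N by apply: Pmax; exists t1.
  have hP2 : (P <= g1)%N by apply: (Mono t1) => //; rewrite e1.
  have eg : g1 = P by lia.
  subst g1.
  have et1 : t1 = (t + P)%N by case: gt1 => _ hg1 _ _; have := inps H hg1; lia.
  subst t1; split => // i hi.
  apply: u01 => // e; have := min1 (t + i)%N; rewrite e eqxx andbT => h2.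
  have : (t + P <= t + i)%N by apply: h2; lia.
  lia.
have hall : forall k, isgap (ts + k * P)%N P.
  elim => [|k IHk]; first by rewrite mul0n addn0.
  have hk : (12 * m <= ts + k * P)%N by lia.
  have [h _] := Next _ hk IHk.
  by rewrite mulSn addnCA addnC.
have hper : forall n, u (ts + n)%N = if (P %| n)%N then 1%N else 0%N.
  move=> n.
  have P0 : (0 < P)%N by case: gts => _ hg _ _; have := inps H hg; lia.
  have hi := ltn_pmod n P0; have en := divn_eq n P.
  move: (n %/ P)%N (n %% P)%N en hi => k i -> hi.
  rewrite dvdn_addr ?dvdn_mull // /dvdn modn_small // addnA.
  case: (posnP i) => [->|ip].
    by rewrite addn0; case: (hall k).
  have hk : (12 * m <= ts + k * P)%N by lia.
  have [_ hz] := Next _ hk (hall k).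
  rewrite hz; [by move: ip; case: (i == 0)%N =>// ; lia | lia].
case: gts => _ hP _ _.
exists P => //; exists ts, (2 * (3 * m - P))%N => n.
have [hxi hxr] := hx P hP.
by rewrite hper (xchar hm hth H hP hxi hxr) addKn leq_addr.
Qed.
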